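(* Let $h\in\mathbb N$, $u,v\in\mathfrak S_n$, and let $F$ be an $h$-flipclass of paths from $u$ to $v$. Then every vertex $(x,i)$ of $TS_F$ with $i>1$ has in-degree at least $2$ in $TS_F$, and every vertex $(x,i)$ of $TS_F$ with $i<h-1$ has out-degree at least $2$ in $TS_F$.
   Context: $\mathfrak S_n$ is the symmetric group on $[n]$, $T$ its transpositions, $\ell$ the length w.r.t. simple transpositions. The Bruhat graph $B(\mathfrak S_n)$ has an edge $x\xrightarrow{t}y$ iff $yx^{-1}=t\in T$ and $\ell(x)<\ell(y)$; $P_h(u,v)$ is the set of paths $u=x_0\to\cdots\to x_h=v$ of length $h$. Between two fixed vertices there are $0$ or $2$ paths of length $2$, each the flip of the other; the $i$-th flip operator $f_i$ ($i\in[h-1]$) on $P_h(u,v)$ replaces $x_{i-1}\to x_i\to x_{i+1}$ by its flip; the orbits of $\langle f_1,\dots,f_{h-1}\rangle$ on $P_h(u,v)$ are the $h$-flipclasses of paths from $u$ to $v$. The time-support graph $TS_F$ of such $F$ has vertices $(a,i)$ ($0\le i\le h$) such that some path $(x_0,\dots,x_h)\in F$ has $x_i=a$, and edges $(a,i)\xrightarrow{t}(b,i+1)$ whenever some path of $F$ contains the edge $x_i=a\xrightarrow{t}b=x_{i+1}$. *)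

(* Defs.v *)
From mathcomp Require Import all_boot all_fingroup.
Set Implicit Arguments. Unset Strict Implicit. Unset Printing Implicit Defensive.

Notation Sn n := {perm 'I_n}.

Definition is_transposition n (t : Sn n) : bool :=
  [exists a : 'I_n, exists b : 'I_n, (a != b) && (t == tperm a b)].

(* Length w.r.t. simple transpositions = number of inversions. *)
Definition perm_length n (s : Sn n) : nat :=
  #|[set ij : 'I_n * 'I_n | (ij.1 < ij.2) && (s ij.2 < s ij.1)]|.

(* Bruhat graph edge x -> y : y x^-1 in T and l(x) < l(y).
   (mathcomp's product of permutations is composition in diagrammatic order;
   since T is closed under conjugation, "y*x^-1 in T" does not depend on the
   composition convention.) *)
Definition bruhat_edge n (x y : Sn n) : bool :=
  is_transposition (y * x^-1)%g && (perm_length x < perm_length y).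

Definition Path n h := (h.+1).-tuple (Sn n).

Definition vtx n h (p : Path n h) (i : nat) : Sn n := nth 1%g (tval p) i.

Definition is_path n h (u v : Sn n) (p : Path n h) : bool :=
  [&& vtx p 0 == u, vtx p h == v &
      [forall i : 'I_h, bruhat_edge (vtx p i) (vtx p i.+1)]].

(* q = f_i p for some i in [h-1]: q is the path of P_h(u,v) obtained from p
   by replacing x_{i-1} -> x_i -> x_{i+1} by its flip (the other path of
   length 2 between x_{i-1} and x_{i+1}). *)
Definition flip_rel n h (u v : Sn n) (p q : Path n h) : bool :=
  [&& is_path u v p, is_path u v q &
      [exists i : 'I_h, [&& 0 < (i : nat),
         [forall j : 'I_h.+1, ((j : nat) != i) ==> (vtx p j == vtx q j)] &
         vtx p i != vtx q i]]].

(* F is an h-flipclass of paths from u to v: an orbit of <f_1,...,f_{h-1}>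
   on P_h(u,v). *)
Definition flipclass n h (u v : Sn n) (F : {set Path n h}) : Prop :=
  exists2 p : Path n h, is_path u v p &
    F = [set q | connect (flip_rel u v) p q].

Definition ts_vertex n h (F : {set Path n h}) (x : Sn n) (i : nat) : bool :=
  (i <= h) && [exists p in F, vtx p i == x].

(* In-degree of (x,i) in TS_F: number of edges (a,i-1) -t-> (x,i); since the
   label t = x a^-1 is determined by a, this is the number of such a. *)
Definition ts_indeg n h (F : {set Path n h}) (x : Sn n) (i : nat) : nat :=
  #|[set a : Sn n | [exists p in F, (vtx p i.-1 == a) && (vtx p i == x)]]|.

Definition ts_outdeg n h (F : {set Path n h}) (x : Sn n) (i : nat) : nat :=
  #|[set b : Sn n | [exists p in F, (vtx p i == x) && (vtx p i.+1 == b)]]|.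

(* Main.v *)
Require Import Defs.
From mathcomp Require Import all_boot all_fingroup zify.

Lemma s3_lemma (P Q R A B C : nat) : P != Q -> Q != R -> R != P ->
  A != B -> B != C -> C != A ->
  (P < Q) == (A < B) -> (Q < R) == (A < C) ->
  ((Q < R) == (B < C)) && ((R < P) == (B < A)) ||
  ((R < P) == (C < A)) && ((P < Q) == (C < B)).
Proof.
case: (ltngtP P Q); case: (ltngtP Q R); case: (ltngtP R P);
case: (ltngtP A B); case: (ltngtP B C); case: (ltngtP C A) => //=; lia.
Qed.

Section Len.
Variable n : nat.
Implicit Types (s : Sn n) (i j : 'I_n).

Definition Inv s := [set ij : 'I_n * 'I_n | (ij.1 < ij.2) && (s ij.2 < s ij.1)].

Lemma len_lt s i j : i < j -> s i < s j ->
  perm_length s < perm_length (tperm i j * s)%g.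
Proof.
move=> ij sij.
rewrite /perm_length -/(Inv s) -/(Inv (tperm i j * s)%g).
set t := tperm i j.
pose g (kl : 'I_n * 'I_n) := if t kl.2 < t kl.1 then kl else (t kl.1, t kl.2).
have ginj : {in Inv s &, injective g}.
  move=> [k l] [k' l']; rewrite !inE /= /g /= => /andP[kl _] /andP[kl' _].
  case: ifP => f; case: ifP => f'.
  - by [].
  - move=> [ek el]; move: f; rewrite ek el !tpermK /=; lia.
  - move=> [ek el]; move: f'; rewrite -ek -el !tpermK /=; lia.
  - by move=> [/perm_inj -> /perm_inj ->].
have sub : (i, j) |: [set g x | x in Inv s] \subset Inv (t * s)%g.
  apply/subsetP => z; rewrite !inE => /orP[/eqP -> /=|/imsetP[[k l]]].
    by rewrite !permM /t tpermL tpermR ij sij.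
  rewrite inE /= => /andP[kl slk] ->; rewrite /g /=.
  idtac.
  case: ifP => f /=; rewrite ?permM ?tpermK.
    apply/andP; split => //; move: f; rewrite /t.
    case: tpermP => [ek|ek|k1 k2]; case: tpermP => [el|el|l1 l2];
      move: kl slk; rewrite ?ek ?el => kl slk; try lia.
  apply/andP; split => //.
  have : (t k : nat) != t l by rewrite val_eqE (inj_eq perm_inj); apply/eqP => e; move: kl; rewrite e; lia.
  move: f; lia.
have nin : (i, j) \notin [set g x | x in Inv s].
  apply/imsetP => -[[k0 l0]]; rewrite inE /= /g /= => /andP[kl0 slk0].
  case: ifP => f.
    by case=> ek el; move: slk0 sij; rewrite -ek -el; lia.
  case=> ek el; have ek' : k0 = j by rewrite -(tpermK i j k0) -/t -ek tpermL.
  have el' : l0 = i by rewrite -(tpermK i j l0) -/t -el tpermR.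
  by move: kl0 ij; rewrite ek' el'; lia.
have := subset_leq_card sub; rewrite cardsU1 nin card_in_imset //.
Qed.
End Len.

Section Edge.
Variable n : nat.
Implicit Types (s a b c : Sn n) (i j p q r : 'I_n).

Lemma len_gt s i j : i < j -> s j < s i ->
  perm_length (tperm i j * s)%g < perm_length s.
Proof.
move=> ij sji.
have := @len_lt n (tperm i j * s)%g i j ij.
by rewrite !permM tpermL tpermR mulgA tperm2 mul1g; apply.
Qed.

Lemma tpE (x y z : 'I_n) : tperm x y z = if z == x then y else if z == y then x else z.
Proof. by case: tpermP => [->|->|/eqP/negbTE -> /eqP/negbTE ->]; rewrite ?eqxx //; case: eqP. Qed.

Lemma edgeP s i j : i != j ->
  bruhat_edge s (tperm i j * s)%g = ((i < j) == (s i < s j)).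
Proof.
move=> ij; rewrite /bruhat_edge mulgK.
have -> : is_transposition (tperm i j).
  by apply/existsP; exists i; apply/existsP; exists j; rewrite ij eqxx.
rewrite /=.
have sij : (s i : nat) != s j by rewrite val_eqE (inj_eq perm_inj).
have ij' : (i : nat) != j by rewrite val_eqE.
case: (ltngtP i j) => h.
- case: (ltngtP (s i) (s j)) => h'.
  + by rewrite len_lt.
  + by apply/negbTE; rewrite -leqNgt ltnW // len_gt.
  + by move: sij; rewrite h' eqxx.
- rewrite tpermC; case: (ltngtP (s i) (s j)) => h'.
  + by apply/negbTE; rewrite -leqNgt ltnW // len_gt.
  + by rewrite len_lt.
  + by move: sij; rewrite h' eqxx.
- by move: ij'; rewrite h eqxx.
Qed.

Lemma edge_inv s y : bruhat_edge s y ->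
  exists i, exists j, [/\ i != j, y = (tperm i j * s)%g & (i < j) == (s i < s j)].
Proof.
move=> H; have := H; case/andP => /existsP[i /existsP[j /andP[ij /eqP e]]] _.
have ey : y = (tperm i j * s)%g by rewrite -e mulgKV.
by exists i, j; split => //; rewrite -edgeP // -ey.
Qed.

Lemma core a p q r : p != q -> q != r -> r != p ->
  bruhat_edge a (tperm p q * a)%g ->
  bruhat_edge (tperm p q * a)%g (tperm q r * (tperm p q * a))%g ->
  exists2 b', b' != (tperm p q * a)%g &
     bruhat_edge a b' && bruhat_edge b' (tperm q r * (tperm p q * a))%g.
Proof.
move=> pq qr rp.
have qp : q != p by rewrite eq_sym.
have rq : r != q by rewrite eq_sym.
have pr : p != r by rewrite eq_sym.
have NE := (negbTE pq, negbTE qr, negbTE rp, negbTE qp, negbTE rq, negbTE pr).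
rewrite !edgeP // !permM !tpE !eqxx !NE => E1 E2.
have vn x y : x != y -> (a x : nat) != a y by move=> xy; rewrite val_eqE (inj_eq perm_inj).
have pq' : (p : nat) != q by rewrite val_eqE.
have qr' : (q : nat) != r by rewrite val_eqE.
have rp' : (r : nat) != p by rewrite val_eqE.
case/orP: (@s3_lemma _ _ _ _ _ _ pq' qr' rp' (vn _ _ pq) (vn _ _ qr) (vn _ _ rp) E1 E2) => /andP[F1 F2].
- exists (tperm q r * a)%g.
    apply/eqP => /mulIg /(congr1 (fun f : Sn n => f r)).
    by rewrite !tpE !eqxx !NE => e; move: qr; rewrite e eqxx.
  have -> : (tperm q r * (tperm p q * a) = tperm r p * (tperm q r * a))%g.
    rewrite !mulgA; congr (_ * _)%g; apply/permP => z; rewrite !permM !tpE.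
    have [ez|zp] := eqVneq z p; first by subst z; do 4 rewrite ?eqxx ?NE /=.
    have [ez|zq] := eqVneq z q; first by subst z; do 4 rewrite ?eqxx ?NE /=.
    have [ez|zr] := eqVneq z r; first by subst z; do 4 rewrite ?eqxx ?NE /=.
    by rewrite !ifN.
  rewrite !edgeP // F1 /= !permM !tpE !eqxx !NE.
  by rewrite eq_sym in F2 *.
- exists (tperm r p * a)%g.
    apply/eqP => /mulIg /(congr1 (fun f : Sn n => f r)).
    by rewrite !tpE !eqxx !NE => e; move: rp; rewrite e eqxx.
  have -> : (tperm q r * (tperm p q * a) = tperm p q * (tperm r p * a))%g.
    rewrite !mulgA; congr (_ * _)%g; apply/permP => z; rewrite !permM !tpE.
    have [ez|zp] := eqVneq z p; first by subst z; do 4 rewrite ?eqxx ?NE /=.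
    have [ez|zq] := eqVneq z q; first by subst z; do 4 rewrite ?eqxx ?NE /=.
    have [ez|zr] := eqVneq z r; first by subst z; do 4 rewrite ?eqxx ?NE /=.
    by rewrite !ifN.
  rewrite !edgeP // F1 /= !permM !tpE !eqxx !NE.
  by [].
Qed.
End Edge.

Section Step.
Variable n : nat.
Implicit Types (s a b c : Sn n) (i j p q r : 'I_n).

Lemma noback a b c : bruhat_edge a b -> bruhat_edge b c -> c != a.
Proof.
move=> H1 H2; apply/eqP => e; move: H1 H2; rewrite e => /andP[_ l1] /andP[_ l2].
by move: (ltn_trans l1 l2); rewrite ltnn.
Qed.

Lemma step a b c : bruhat_edge a b -> bruhat_edge b c ->
  exists2 b', b' != b & bruhat_edge a b' && bruhat_edge b' c.
Proof.
move=> H1 H2.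
have [p [q [pq eb _]]] := @edge_inv n _ _ H1; subst b.
have [r [s [rs ec _]]] := @edge_inv n _ _ H2; subst c.
have NB := @noback _ _ _ H1 H2.
have [disj|nd] := boolP [&& r != p, r != q, s != p & s != q].
  case/and4P: disj => rp rq sp sq.
  have qp : q != p by rewrite eq_sym.
  have sr : s != r by rewrite eq_sym.
  have pr : p != r by rewrite eq_sym.
  have qr : q != r by rewrite eq_sym.
  have ps : p != s by rewrite eq_sym.
  have qs : q != s by rewrite eq_sym.
  have NE := (negbTE pq, negbTE qp, negbTE rs, negbTE sr, negbTE rp, negbTE pr,
              negbTE rq, negbTE qr, negbTE sp, negbTE ps, negbTE sq, negbTE qs).
  exists (tperm r s * a)%g.
    apply/eqP => /mulIg /(congr1 (fun f : Sn n => f r)).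
    by rewrite !tpE; do 4 rewrite ?eqxx ?NE /=; move=> e; move: rs; rewrite e eqxx.
  have -> : (tperm r s * (tperm p q * a) = tperm p q * (tperm r s * a))%g.
    rewrite !mulgA; congr (_ * _)%g; apply/permP => z; rewrite !permM !tpE.
    have [ez|zp] := eqVneq z p; first by subst z; do 4 rewrite ?eqxx ?NE /=.
    have [ez|zq] := eqVneq z q; first by subst z; do 4 rewrite ?eqxx ?NE /=.
    have [ez|zr] := eqVneq z r; first by subst z; do 4 rewrite ?eqxx ?NE /=.
    have [ez|zs] := eqVneq z s; first by subst z; do 4 rewrite ?eqxx ?NE /=.
    by rewrite !ifN.
  move: H1 H2; rewrite !edgeP // !permM !tpE; do 4 rewrite ?eqxx ?NE /=.
  by move=> -> ->.
rewrite !negb_and !negbK in nd.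
case/or4P: nd => /eqP e; rewrite {}e in H2 NB rs *.
- have [sq|sq] := eqVneq s q.
    by move: NB; rewrite sq mulgA tperm2 mul1g eqxx.
  rewrite (tpermC p q) in H1 H2 *; apply: core => //; by rewrite eq_sym.
- have [sp|sp] := eqVneq s p.
    by move: NB; rewrite sp (tpermC q p) mulgA tperm2 mul1g eqxx.
  apply: core => //; by rewrite eq_sym.
- have [rq|rq] := eqVneq r q.
    by move: NB; rewrite rq (tpermC q p) mulgA tperm2 mul1g eqxx.
  rewrite (tpermC p q) (tpermC r p) in H1 H2 *; apply: core => //; by rewrite eq_sym.
- have [rp|rp] := eqVneq r p.
    by move: NB; rewrite rp mulgA tperm2 mul1g eqxx.
  rewrite (tpermC r q) in H1 H2 *; apply: core => //; by rewrite eq_sym.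
Qed.
End Step.

Lemma flip_exists n h (u v : Sn n) (p : Path n h) k : is_path u v p -> 0 < k < h ->
  exists q : Path n h, [/\ flip_rel u v p q, vtx q k != vtx p k &
                          forall j, j != k -> vtx q j = vtx p j].
Proof.
move=> P /andP[k0 kh].
have P' := P; case/and3P: P' => /eqP p0 /eqP ph /forallP E.
have kh' : k.-1 < h by lia.
have E1 := E (Ordinal kh'); rewrite /= prednK // in E1.
have E2 := E (Ordinal kh).
have [b' nb /andP[e1 e2]] := @step _ _ _ _ E1 E2.
have sz : size (set_nth 1%g p k b') == h.+1.
  by rewrite size_set_nth size_tuple; apply/eqP; lia.
pose q : Path n h := Tuple sz.
have vq j : vtx q j = if j == k then b' else vtx p j by rewrite /vtx /= nth_set_nth.
have Pq : is_path u v q.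
  apply/and3P; split.
  - by rewrite vq ifN ?p0 //; lia.
  - by rewrite vq ifN ?ph //; lia.
  - apply/forallP => i; rewrite !vq.
    have [ik|ik] := eqVneq (i : nat) k.
      by rewrite ifN ?ik //; lia.
    have [ik'|ik'] := eqVneq (i.+1) k.
      by have -> : (i : nat) = k.-1 by lia.
    exact: E.
exists q; split.
- rewrite /flip_rel P Pq /=; apply/existsP; exists (Ordinal kh); rewrite /= k0 /=.
  rewrite vq eqxx eq_sym nb andbT; apply/forallP => j; apply/implyP => jk.
  by rewrite vq (negbTE jk).
- by rewrite vq eqxx.
- by move=> j /negbTE jk; rewrite vq jk.
Qed.

Lemma two_le (T : finType) (S : {set T}) x y : x \in S -> y \in S -> x != y -> 2 <= #|S|.
Proof.
move=> xS yS xy.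
have sub : [set x; y] \subset S.
  by apply/subsetP => z; rewrite !inE => /orP[] /eqP ->.
by have := subset_leq_card sub; rewrite cards2 xy.
Qed.

Theorem lemma5p3 (n h : nat) (u v : {perm 'I_n}) (F : {set Path n h}) :
  flipclass u v F ->
  (forall (x : {perm 'I_n}) (i : nat), 1 < i -> ts_vertex F x i ->
     2 <= ts_indeg F x i) /\
  (forall (x : {perm 'I_n}) (i : nat), i < h - 1 -> ts_vertex F x i ->
     2 <= ts_outdeg F x i).
Proof.
move=> [p0 P0 ->].
have inF q : q \in [set q | connect (flip_rel u v) p0 q] -> is_path u v q.
  rewrite inE => C.
  have cl : closed_mem (@flip_rel n h u v) (mem [pred x : Path n h | is_path u v x]).
    move=> x y; rewrite /flip_rel; case/and3P => hx hy _; by rewrite !inE /= hx hy.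
  by have := closed_connect cl C; rewrite !inE P0 => <-.
have flipF q k : q \in [set q | connect (flip_rel u v) p0 q] -> 0 < k < h ->
    exists q', [/\ q' \in [set q | connect (flip_rel u v) p0 q],
       vtx q' k != vtx q k & forall j, j != k -> vtx q' j = vtx q j].
  move=> qF kh; have [q' [fl nq eq]] := @flip_exists _ _ _ _ _ _ (inF _ qF) kh.
  exists q'; split => //; move: qF; rewrite !inE => C.
  exact: connect_trans C (connect1 fl).
split.
- move=> x i i1 /andP[ih /existsP[p /andP[pF /eqP px]]].
  have [|q [qF nq eq]] := flipF p i.-1 pF; first by apply/andP; split; lia.
  apply: (@two_le _ _ (vtx p i.-1) (vtx q i.-1)); rewrite ?inE.
  + by apply/existsP; exists p; rewrite pF px !eqxx.
  + apply/existsP; exists q; rewrite qF (eq i) ?px ?eqxx //; lia.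
  + by rewrite eq_sym.
- move=> x i i1 /andP[ih /existsP[p /andP[pF /eqP px]]].
  have [|q [qF nq eq]] := flipF p i.+1 pF; first by apply/andP; split; lia.
  apply: (@two_le _ _ (vtx p i.+1) (vtx q i.+1)); rewrite ?inE.
  + by apply/existsP; exists p; rewrite pF px !eqxx.
  + apply/existsP; exists q; rewrite qF (eq i) ?px ?eqxx //; lia.
  + by rewrite eq_sym.
Qed.
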